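(* The sequence $(\Gamma(n,n+1))_{n\ge1}$ is $1,2,1,2,1,2,\ldots$, i.e., $\Gamma(n,n+1)=1$ for odd $n$ and $\Gamma(n,n+1)=2$ for even $n$.
   Context: For relatively prime positive integers $p,q$, exactly one of the equations $px+qy=\frac{(p-1)(q-1)}{2}$ (Equation 1) and $px+qy+1=\frac{(p-1)(q-1)}{2}$ (Equation 2) has a solution in nonnegative integers $(x,y)$. For positive integers $a,b$ with $d=\gcd(a,b)$, $\Gamma(a,b)=1$ if Equation 1 with $(p,q)=(a/d,b/d)$ has a nonnegative integer solution, and $\Gamma(a,b)=2$ otherwise. *)

(* Defs.v *)
From mathcomp Require Import all_boot.
From mathcomp Require Import boolp.
Set Implicit Arguments. Unset Strict Implicit. Unset Printing Implicit Defensive.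

Definition eq1_solvable (p q : nat) : Prop :=
  exists x y : nat, p * x + q * y = ((p - 1) * (q - 1)) %/ 2.

Definition Gamma (a b : nat) : nat :=
  let d := gcdn a b in
  if `[< eq1_solvable (a %/ d) (b %/ d) >] then 1 else 2.

(* Main.v *)
Require Import Defs.
From mathcomp Require Import all_boot.
From mathcomp Require Import boolp.
From mathcomp Require Import zify.

Theorem lemma4p2 (n : nat) : 1 <= n ->
  Gamma n n.+1 = (if odd n then 1 else 2).
Proof.
move=> hn; rewrite /Gamma.
have -> : gcdn n n.+1 = 1.
  by apply/eqP; have := coprimeSn n; rewrite /coprime gcdnC.
rewrite !divn1 /eq1_solvable.
have -> : n.+1 - 1 = n by lia.
have := odd_double_half n.
case: (odd n) => /= Hn.
- rewrite asboolT //; exists n./2, 0.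
  have -> : (n - 1) * n = (n * n./2) * 2 by nia.
  by rewrite mulnK // muln0 addn0.
- rewrite asboolF // => -[x [y]].
  have -> : (n - 1) * n = (n./2 * (n - 1)) * 2 by nia.
  rewrite mulnK // => E.
  have hk : 1 <= n./2 by lia.
  move: E; rewrite -Hn => E.
  case: (leqP n./2 y) => hy; first by nia.
  have h1 : x + y < n./2 by nia.
  nia.
Qed.
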